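(* Let $Q$ be a nonempty subset of a normed linear space $(U,\|\cdot\|)$. Let $r>0$ and let $\{\beta_n\}_n$ be a sequence of positive real numbers with $\lim_{n\to\infty}\beta_n=1$. Suppose $T:Q\to Q$ satisfies: for all $p,q\in Q$ with $\|p-q\|<r$, $\|T^np-T^nq\|\leq\beta_n\|p-q\|$ for every $n\in\mathbb{N}$. Let $\{q_n\}_n$ be a sequence in $Q$ such that $\|Tq_n-q_n\|\to 0$ as $n\to\infty$. Then for each $m\in\mathbb{N}$, $\|T^mq_n-q_n\|\to 0$ as $n\to\infty$. *)

(* Defs.v *)
From HB Require Import structures.
From mathcomp Require Import all_boot all_order all_algebra.
From mathcomp Require Import all_classical all_reals all_analysis.

(* Main.v *)
Require Import Defs.
From HB Require Import structures.
From mathcomp Require Import all_boot all_order all_algebra.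
From mathcomp Require Import all_classical all_reals all_analysis.
Import Order.TTheory GRing.Theory Num.Theory.
Import numFieldNormedType.Exports.
Local Open Scope classical_set_scope.
Local Open Scope ring_scope.

Lemma key (R : realType) (U : normedModType R) (Q : set U)
  (r : R) (beta : nat -> R) (T : U -> U) x :
  (forall n, 0 < beta n) ->
  (forall p, Q p -> Q (T p)) ->
  (forall p p', Q p -> Q p' -> `|p - p'| < r ->
     forall n, (0 < n)%N -> `|iter n T p - iter n T p'| <= beta n * `|p - p'|) ->
  Q x -> `|T x - x| < r ->
  forall m, `|iter m T x - x| <= (\sum_(i < m) (1 + beta i)) * `|T x - x|.
Proof.
move=> bp QT H Qx hr; elim=> [|m IH].
  by rewrite big_ord0 /= subrr normr0 mul0r.
rewrite big_ord_recr /= mulrDl.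
have -> : iter m.+1 T x - x = (iter m T (T x) - iter m T x) + (iter m T x - x).
  by rewrite -iterSr /= addrA subrK.
apply: (le_trans (ler_normD _ _)); rewrite addrC lerD //.
case: m {IH} => [|m].
  by rewrite /= ler_peMl // lerDl ltW.
apply: (le_trans (H _ _ (QT _ Qx) Qx hr m.+1 isT)).
by rewrite ler_wpM2r // lerDr.
Qed.

Theorem mainTheorem3 (R : realType) (U : normedModType R) (Q : set U)
  (r : R) (beta : nat -> R) (T : U -> U) (q : nat -> U) :
  Q !=set0 ->
  0 < r ->
  (forall n, 0 < beta n) ->
  beta @ \oo --> (1 : R) ->
  (forall p, Q p -> Q (T p)) ->
  (forall p p', Q p -> Q p' -> `|p - p'| < r ->
     forall n, (0 < n)%N -> `|iter n T p - iter n T p'| <= beta n * `|p - p'|) ->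
  (forall n, Q (q n)) ->
  (fun n => `|T (q n) - q n|) @ \oo --> (0 : R) ->
  forall m : nat, (fun n => `|iter m T (q n) - q n|) @ \oo --> (0 : R).
Proof.
move=> _ r0 bp _ QT H Qq hc m.
apply: (@squeeze_cvgr _ _ _ _ (fun _ => 0)
  (fun n => (\sum_(i < m) (1 + beta i)) * `|T (q n) - q n|)).
- have hl := cvgr_lt _ hc _ r0.
  near=> n; have hn : `|T (q n) - q n| < r by near: n; exact: hl.
  by rewrite normr_ge0 /= (@key _ _ Q r beta T _ bp QT H (Qq n) hn).
- exact: cvg_cst.
- have := @cvgMl_tmp _ _ _ _ _ (\sum_(i < m) (1 + beta i)) _ hc.
  rewrite mulr0; apply; exact: _.
Unshelve. all: try end_near. Qed.
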